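(* For every even integer $t \ge 4$, the sequence $\left(\left\lfloor n^t/24 \right\rfloor\right)_{n \ge 1}$ is eventually prime-free.
   Context: A sequence $(a_n)_{n\ge 1}$ of positive integers is called eventually prime-free if there exists an index $n_0$ such that $a_n$ is composite for all $n \ge n_0$. (Here, as in the paper, this is understood as: only finitely many terms $a_n$ are prime.) *)

(* Defs.v *)
From mathcomp Require Import all_boot.

(* A sequence a : nat -> nat (indexed by n >= 1; the value at 0 is irrelevant)
   is eventually prime-free if only finitely many terms are prime, i.e.
   there is n0 such that a n is not prime for all n >= n0. *)
Definition eventually_prime_free (a : nat -> nat) : Prop :=
  exists n0 : nat, forall n : nat, n0 <= n -> ~~ prime (a n).

(* Main.v *)
Require Import Defs.
From mathcomp Require Import all_boot zify.
Lemma np a b : 1 < a -> 1 < b -> ~~ prime (a*b).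
Proof.
move=> ha hb; apply/negP => /primeP [_ H].
have /orP [/eqP E|/eqP E] := H a (dvdn_mulr b (dvdnn a)); nia.
Qed.
Lemma key m : 24 <= m -> m %% 4 != 2 -> ~~ prime (m^2 %/ 24).
Proof.
move=> hm h4.
have hr : m %% 12 < 12 by rewrite ltn_mod.
rewrite (divn_eq m 12) in h4 hm *.
move: (m %/ 12) (m %% 12) hr h4 hm => q r hr h4 hm.
have hq : 2 <= q by nia.
have E : forall r a s, s < 24 -> (q * 12 + r)^2 = a * 24 + s -> (q*12+r)^2 %/ 24 = a.
  by move=> r0 a s hs ->; rewrite divnMDl // divn_small // addn0.
case: r hr h4 hm => [|[|[|[|[|[|[|[|[|[|[|[|r]]]]]]]]]]]] hr h4 hm; try lia.
- by rewrite (E _ (6*q*q) 0) //; [apply: np; nia | nia].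
- by rewrite (E _ (q*(6*q+1)) 1) //; [apply: np; nia | nia].
- by rewrite (E _ ((3*q)*(2*q+1)) 9) //; [apply: np; nia | nia].
- by rewrite (E _ ((2*q)*(3*q+2)) 16) //; [apply: np; nia | nia].
- by rewrite (E _ ((2*q+1)*(3*q+1)) 1) //; [apply: np; nia | nia].
- by rewrite (E _ ((2*q+1)*(3*q+2)) 1) //; [apply: np; nia | nia].
- by rewrite (E _ ((2*(q+1))*(3*q+1)) 16) //; [apply: np; nia | nia].
- by rewrite (E _ ((3*(q+1))*(2*q+1)) 9) //; [apply: np; nia | nia].
- by rewrite (E _ ((q+1)*(6*q+5)) 1) //; [apply: np; nia | nia].
Qed.
Theorem theorem6 (t : nat) (ht_even : ~~ odd t) (ht4 : 4 <= t) :
  eventually_prime_free (fun n => n ^ t %/ 24).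
Proof.
exists 24 => n hn /=.
have ht : t = (t./2).*2 by rewrite -{1}(odd_double_half t) (negbTE ht_even).
set k := t./2 in ht.
have hk : 2 <= k by lia.
rewrite ht -mul2n mulnC expnM.
apply: key.
  apply: (@leq_trans n) => //; rewrite -{1}(expn1 n) leq_pexp2l //; lia.
rewrite -(subnKC hk) expnD.
case/boolP: (odd n) => ho.
  have : odd (n ^ 2 * n ^ (k - 2)) by rewrite oddM !oddX ho !orbT.
  move: (n ^ 2 * n ^ (k - 2)) => y hy; have := modn2 y; rewrite hy; lia.
have : 4 %| n ^ 2 * n ^ (k - 2).
  apply: dvdn_mulr; rewrite -(odd_double_half n) (negbTE ho) add0n -mul2n expnMn.
  exact: dvdn_mulr.
move: (n ^ 2 * n ^ (k - 2)) => y; lia.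
Qed.
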